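(* Let $\varphi$ be a smooth skew-morphism of the dihedral group $D_n$, $n\ge3$. If $n$ is odd, then $\varphi$ is an automorphism of $D_n$. If $n$ is even and $\varphi$ is not an automorphism of $D_n$, then $\mathrm{Ker}\,\varphi$ is one of $\langle a^2\rangle$, $\langle a^2,ab\rangle$, $\langle a^2,b\rangle$. Moreover, letting $\gamma$ be the automorphism of $D_n$ with $\gamma(a)=a$, $\gamma(b)=ab$, $\varphi$ is a smooth skew-morphism with $\mathrm{Ker}\,\varphi=\langle a^2,b\rangle$ if and only if $\gamma^{-1}\varphi\gamma$ is a smooth skew-morphism with kernel $\langle a^2,ab\rangle$.
   Context: $D_n=\langle a,b\mid a^n=b^2=1,\ b^{-1}ab=a^{-1}\rangle$, $n\ge3$. A skew-morphism of a finite group $A$ is a permutation $\varphi$ of the set $A$ with $\varphi(1)=1$ for which there exists a function $\pi:A\to\mathbb{Z}_k$, where $k$ is the order of $\varphi$, such that $\varphi(xy)=\varphi(x)\varphi^{\pi(x)}(y)$ for all $x,y\in A$; $\pi$ is the power function. An automorphism is a skew-morphism with $\pi\equiv1$. The kernel is $\mathrm{Ker}\,\varphi=\{x:\pi(x)=1\}$, and the core is $\mathrm{Core}\,\varphi=\bigcap_{i=1}^k\varphi^i(\mathrm{Ker}\,\varphi)$. $\varphi$ is smooth if $\varphi(x)\in x\,\mathrm{Core}\,\varphi$ for all $x$. *)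

(* Defs.v *)
From mathcomp Require Import all_boot all_fingroup.
Set Implicit Arguments. Unset Strict Implicit. Unset Printing Implicit Defensive.
Local Open Scope group_scope.

Section Skew.
Variable gT : finGroupType.
Implicit Types (G : {set gT}) (phi : {perm gT}) (pi : gT -> nat).

(* The order k of phi is #[phi]; the power function pi : G -> Z_k is
   represented by natural-number representatives (only pi x mod k matters,
   since phi ^+ k = 1).  phi is a permutation of the set G (perm_on G). *)
Definition skew_morphism G phi pi : Prop :=
  [/\ perm_on G phi, phi 1 = 1 &
      {in G &, forall x y, phi (x * y) = phi x * (phi ^+ pi x) y}].

Definition skew_ker G phi pi : {set gT} :=
  [set x in G | pi x == 1 %[mod #[phi]]].

Definition skew_core G phi pi : {set gT} :=
  \bigcap_(1 <= i < #[phi].+1) [set (phi ^+ i) x | x in skew_ker G phi pi].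

Definition smooth_skew G phi pi : Prop :=
  skew_morphism G phi pi /\
  {in G, forall x, phi x \in x *: skew_core G phi pi}.

Definition skew_is_aut G phi pi : Prop :=
  {in G, forall x, pi x = 1 %[mod #[phi]]}.

(* G is the dihedral group D_n = <a, b | a^n = b^2 = 1, b^-1 a b = a^-1>
   with generators a, b (presentation faithfully realised: order 2n). *)
Definition dihedral_pres G (n : nat) (a b : gT) : Prop :=
  [/\ G = <<[set a; b]>>, #|G| = (2 * n)%N, a ^+ n = 1, b ^+ 2 = 1 &
      b^-1 * a * b = a^-1].

End Skew.

(* Main.v *)
Require Import Defs.
From mathcomp Require Import all_boot all_fingroup all_solvable.
From mathcomp Require Import zify.
Set Implicit Arguments. Unset Strict Implicit. Unset Printing Implicit Defensive.
Local Open Scope group_scope.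

Lemma eqmM k x1 y1 x2 y2 : x1 = y1 %[mod k] -> x2 = y2 %[mod k] ->
  (x1 * x2)%N = (y1 * y2)%N %[mod k].
Proof. by move=> h1 h2; rewrite -modnMm h1 h2 modnMm. Qed.

Lemma eqmX k x y m : x = y %[mod k] -> (x ^ m)%N = (y ^ m)%N %[mod k].
Proof. by move=> h; rewrite -modnXm h modnXm. Qed.

Lemma perm_eqG (gT : finGroupType) (G : {set gT}) (s t : {perm gT}) :
  perm_on G s -> perm_on G t -> {in G, s =1 t} -> s = t.
Proof.
move=> ps pt e; apply/permP => x; case: (boolP (x \in G)) => xG; first exact: e.
by rewrite !(out_perm _ xG).
Qed.

Lemma perm_onX (gT : finGroupType) (G : {set gT}) (s : {perm gT}) m :
  perm_on G s -> perm_on G (s ^+ m).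
Proof.
move=> ps; elim: m => [|m IH]; first by rewrite expg0; apply/subsetP=> x; rewrite inE perm1 eqxx.
by rewrite expgS; apply: perm_onM.
Qed.

Section Skew.
Variables (gT : finGroupType) (G : {group gT}) (phi : {perm gT}) (pi : gT -> nat).
Hypothesis Hsm : smooth_skew G phi pi.
Local Notation k := #[phi].
Local Notation Ker := (skew_ker G phi pi).
Local Notation Core := (skew_core G phi pi).

Lemma sk_on : perm_on G phi. Proof. by case: Hsm => -[]. Qed.
Lemma sk_1 : phi 1 = 1. Proof. by case: Hsm => -[]. Qed.
Lemma sk_M : {in G &, forall x y, phi (x * y) = phi x * (phi ^+ pi x) y}.
Proof. by case: Hsm => -[]. Qed.
Lemma sk_sm : {in G, forall x, phi x \in x *: Core}. Proof. by case: Hsm. Qed.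

Lemma phiXG m x : x \in G -> (phi ^+ m) x \in G.
Proof. by move=> xG; rewrite (perm_closed _ (perm_onX m sk_on)). Qed.

Lemma phiX1 m : (phi ^+ m) 1 = 1.
Proof. elim: m => [|m IH]; first by rewrite expg0 perm1.
by rewrite expgSr permM IH sk_1. Qed.

Lemma phiXD m1 m2 x : (phi ^+ m1) ((phi ^+ m2) x) = (phi ^+ (m2 + m1)) x.
Proof. by rewrite expgD permM. Qed.

Lemma expeq m m' : {in G, phi ^+ m =1 phi ^+ m'} -> m = m' %[mod k].
Proof.
move=> e; apply/eqP; rewrite -eq_expg_mod_order; apply/eqP.
by apply: perm_eqG e; apply: perm_onX; apply: sk_on.
Qed.

Lemma phiXmod m m' : m = m' %[mod k] -> phi ^+ m = phi ^+ m'.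
Proof. by move=> h; rewrite -(expg_mod_order phi m) h expg_mod_order. Qed.

Definition sigma x m := \sum_(i < m) pi ((phi ^+ i) x).

Lemma phiXM m x y : x \in G -> y \in G ->
  (phi ^+ m) (x * y) = (phi ^+ m) x * (phi ^+ sigma x m) y.
Proof.
move=> xG yG; elim: m => [|m IH].
  by rewrite /sigma big_ord0 !expg0 !perm1.
rewrite expgSr permM IH sk_M ?phiXG // /sigma big_ord_recr /= -/(sigma x m).
by rewrite permM phiXD addnC.
Qed.

Lemma piM x y : x \in G -> y \in G -> pi (x * y) = sigma y (pi x) %[mod k].
Proof.
move=> xG yG; apply: expeq => z zG.
have := sk_M (groupM xG yG) zG; rewrite -mulgA sk_M ?groupM // phiXM // sk_M //.
by rewrite -!mulgA => /mulgI /mulgI.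
Qed.

Lemma pi1 : pi 1 = 1 %[mod k].
Proof.
apply: expeq => z zG; have := sk_M (group1 G) zG.
by rewrite mul1g sk_1 mul1g expg1.
Qed.

Lemma kerP x : reflect (x \in G /\ pi x = 1 %[mod k]) (x \in Ker).
Proof. by rewrite inE; apply: (iffP andP) => -[-> /eqP]. Qed.

Lemma ker_hom x y : x \in Ker -> y \in G -> phi (x * y) = phi x * phi y.
Proof.
by case/kerP=> xG e yG; rewrite sk_M // (phiXmod e) expg1.
Qed.

Lemma coreP c j : c \in Core -> (phi ^+ j) c \in Ker.
Proof.
move=> cC0.
have cC : forall i, (1 <= i < k.+1)%N -> c \in [set (phi ^+ i) x | x in Ker].
  move=> i hi; move: cC0; rewrite /skew_core (big_rem i) ?mem_index_iota //=.
  by rewrite inE => /andP[].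
have k0 : 0 < k by apply: order_gt0.
have lt : j %% k < k by rewrite ltn_mod.
have /cC : (1 <= k - j %% k < k.+1)%N by apply/andP; split; lia.
case/imsetP=> x xK ->; rewrite phiXD.
have -> : (k - j %% k + j = k * (j %/ k).+1)%N.
  by rewrite {2}(divn_eq j k); lia.
by rewrite expgM expg_order expg1n perm1.
Qed.

Lemma sigma_const x e m : (forall i, pi ((phi ^+ i) x) = e %[mod k]) ->
  sigma x m = (m * e)%N %[mod k].
Proof.
move=> h; elim: m => [|m IH]; first by rewrite /sigma big_ord0.
by rewrite /sigma big_ord_recr /= -/(sigma x m) mulSn addnC -modnDm IH (h m) modnDm.
Qed.

Lemma coreG c : c \in Core -> c \in G.
Proof. by move=> /(coreP 0); rewrite expg0 perm1 => /kerP[]. Qed.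

Lemma piphi x : x \in G -> pi (phi x) = pi x %[mod k].
Proof.
move=> xG; case/lcosetP: (sk_sm xG) => c cC ->.
rewrite piM //; last exact: coreG.
rewrite (@sigma_const c 1) ?muln1 // => i.
by case/kerP: (coreP i cC).
Qed.

Lemma piphiX i x : x \in G -> pi ((phi ^+ i) x) = pi x %[mod k].
Proof.
move=> xG; elim: i => [|i IH]; first by rewrite expg0 perm1.
by rewrite expgSr permM piphi ?phiXG.
Qed.

Lemma sigmaE y m : y \in G -> sigma y m = (m * pi y)%N %[mod k].
Proof. by move=> yG; apply: sigma_const => i; apply: piphiX. Qed.

Lemma piMul x y : x \in G -> y \in G -> pi (x * y) = (pi x * pi y)%N %[mod k].
Proof. by move=> xG yG; rewrite piM // sigmaE. Qed.

Lemma piX x i : x \in G -> pi (x ^+ i) = (pi x ^ i)%N %[mod k].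
Proof.
move=> xG; elim: i => [|i IH]; first by rewrite expg0 expn0 pi1.
by rewrite expgS piMul ?groupX // expnS -modnMm IH modnMm.
Qed.

Lemma ker_group_set : group_set Ker.
Proof.
apply/group_setP; split; first by apply/kerP; split; [exact: group1 | exact: pi1].
move=> x y /kerP[xG ex] /kerP[yG ey]; apply/kerP; split; first exact: groupM.
by rewrite piMul // -modnMm ex ey modnMm.
Qed.

Canonical KerG := Group ker_group_set.

Lemma phiX_hom m x y : x \in Ker -> y \in G ->
  (phi ^+ m) (x * y) = (phi ^+ m) x * (phi ^+ m) y.
Proof.
move=> xK yG; have [xG ex] := kerP _ xK.
rewrite phiXM // (@phiXmod (sigma x m) m) // sigmaE //.
by rewrite -modnMm ex modnMm muln1.
Qed.

End Skew.

Lemma conj_comm (T : finGroupType) (x y : T) : commute x y -> x ^ y = x.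
Proof. by move=> c; rewrite conjgE c mulKg. Qed.

Section Dihedral.
Variables (gT : finGroupType) (G : {group gT}) (a b : gT).
Hypotheses (HG : (G : {set gT}) = <<[set a; b]>>) (Hb2 : b ^+ 2 = 1)
  (Hrel : b^-1 * a * b = a^-1).

Lemma aG : a \in G. Proof. by rewrite HG mem_gen // !inE eqxx. Qed.
Lemma bG : b \in G. Proof. by rewrite HG mem_gen // !inE eqxx orbT. Qed.
Lemma binv : b^-1 = b.
Proof. by apply/eqP; rewrite eq_invg_mul -Hb2 expgS expg1. Qed.
Lemma aJb : a ^ b = a^-1. Proof. by rewrite conjgE mulgA. Qed.
Lemma bb : b * b = 1. Proof. by rewrite -Hb2 expgS expg1. Qed.

Lemma decomp x : x \in G -> exists i, x = a ^+ i \/ x = a ^+ i * b.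
Proof.
have nA : <[b]> \subset 'N(<[a]>).
  by rewrite cycle_subG inE -cycleJ aJb cycleV subxx.
have cAB : commute <[a]> <[b]> by apply/esym/normC.
have sub : G \subset <[a]> * <[b]>.
  rewrite -(comm_joingE cAB) HG gen_subG; apply/subsetP => y.
  rewrite !inE => /orP[] /eqP ->.
    by apply: (subsetP (joing_subl _ _)); apply: cycle_id.
  by apply: (subsetP (joing_subr _ _)); apply: cycle_id.
move=> /(subsetP sub) /mulsgP[y z /cycleP[i ->] /cycleP[j ->] ->].
exists i; rewrite (divn_eq j 2) expgD mulnC expgM Hb2 expg1n mul1g.
have : j %% 2 < 2 by rewrite ltn_mod.
case: (j %% 2) => [|[|m]] //= _; first by left; rewrite expg0 mulg1.
by right; rewrite expg1.
Qed.

Section WithPhi.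
Variables (phi : {perm gT}) (pi : gT -> nat).
Hypothesis Hsm : smooth_skew G phi pi.
Local Notation k := #[phi].
Local Notation Ker := (skew_ker G phi pi).

Lemma piai i : pi a = 1 %[mod k] -> pi (a ^+ i) = 1 %[mod k].
Proof. by move=> ea; rewrite (piX Hsm) ?aG // -modnXm ea modnXm exp1n. Qed.

Lemma lemX : pi a = 1 %[mod k] -> pi b = 1 %[mod k].
Proof.
move=> ea.
case: (boolP (pi b == 1 %[mod k])) => [/eqP //| hv]; exfalso.
have aiK i : a ^+ i \in Ker by apply/kerP; split; [apply: groupX; exact: aG | exact: piai].
have inA c : c \in Ker -> exists i, c = a ^+ i.
  case/kerP => cG ec; case: (decomp cG) => i [->|ce]; first by exists i.
  move: ec; rewrite ce (piMul Hsm) ?groupX ?aG ?bG // -modnMml piai // modnMml mul1n => eb.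
  by rewrite eb eqxx in hv.
have [s es] : exists s, phi b = b * a ^+ s.
  case/lcosetP: (sk_sm Hsm bG) => c cC ->.
  have := coreP 0 cC; rewrite expg0 perm1 => /inA[s ->]; by exists s.
have [r er] : exists r, phi a = a ^+ r.
  case/lcosetP: (sk_sm Hsm aG) => c cC ->.
  have := coreP 0 cC; rewrite expg0 perm1 => /inA[i ->]; exists i.+1.
  by rewrite expgS.
pose v := pi b; pose psi := phi ^+ v.
have psiM x y : x \in Ker -> y \in G -> psi (x * y) = psi x * psi y.
  exact: phiX_hom Hsm v x y.
have phiM x y : x \in Ker -> y \in G -> phi (x * y) = phi x * phi y.
  exact: ker_hom.
have psib : psi b = phi b.
  have := sk_M Hsm bG bG; rewrite bb (sk_1 Hsm) => /esym/eqP; rewrite -eq_invg_mul -/v -/psi.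
  move/eqP <-; apply/eqP; rewrite eq_invg_mul es mulgA -(mulgA b) -{1}binv.
  by rewrite -conjgE conjXg aJb expgVn mulVg.
have aK : a \in Ker by have := aiK 1%N; rewrite expg1.
have aVK : a^-1 \in Ker.
  by have := @groupV _ (KerG Hsm) a; rewrite /= => ->.
have phiaV : phi a^-1 = (phi a)^-1.
  have := phiM _ _ aK (groupVr aG); rewrite mulgV (sk_1 Hsm) => /esym/eqP.
  by rewrite -eq_invg_mul => /eqP.
have psia : psi a = phi a.
  have E := sk_M Hsm bG aG; rewrite -/v -/psi in E.
  have ba : b * a = a^-1 * b.
    by rewrite -[in RHS]aJb conjgE binv -!mulgA bb mulg1.
  rewrite ba phiM // ?bG // phiaV in E.
  have -> : psi a = (phi a)^-1 ^ phi b.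
    by rewrite conjgE E mulKg.
  rewrite er es conjgM conjVg conjXg aJb expgVn invgK conj_comm //.
  exact: commuteX2.
have psiai i : psi (a ^+ i) = phi (a ^+ i).
  elim: i => [|i IH]; first by rewrite expg0 (sk_1 Hsm) (phiX1 Hsm).
  by rewrite expgS psiM ?phiM ?groupX ?aG // IH psia.
have : v = 1 %[mod k].
  apply: (expeq Hsm) => x xG; rewrite expg1 -/psi.
  case: (decomp xG) => i [->|->]; first exact: psiai.
  by rewrite psiM ?phiM ?bG // psiai psib.
by move=> e; rewrite /v e eqxx in hv.
Qed.


Lemma aexp_split i : a ^+ i = (a ^+ 2) ^+ (i./2) * a ^+ (odd i).
Proof. by rewrite -expgM -expgD addnC mul2n odd_double_half. Qed.

Lemma pib2 : (pi b * pi b)%N = 1 %[mod k].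
Proof. by rewrite -(piMul Hsm) ?bG // bb (pi1 Hsm). Qed.

Lemma pia2 : (pi a * pi a)%N = 1 %[mod k].
Proof.
have h1 : (pi a^-1 * pi a)%N = 1 %[mod k].
  by rewrite -(piMul Hsm) ?groupV ?aG // mulVg (pi1 Hsm).
have h2 : pi (b * a * b) = (pi b * pi a * pi b)%N %[mod k].
  by rewrite (piMul Hsm) ?groupM ?aG ?bG // -modnMml (piMul Hsm) ?aG ?bG // modnMml.
have h3 : pi (b * a * b) = pi a^-1 by rewrite -{1}binv Hrel.
have e1 : (pi a * pi a * (pi b * pi b))%N = (pi a * pi a)%N %[mod k].
  by rewrite -modnMm pib2 modnMm muln1.
rewrite -e1.
have -> : (pi a * pi a * (pi b * pi b) = pi b * pi a * pi b * pi a)%N by nia.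
by rewrite -modnMml -h2 modnMml h3 h1.
Qed.

Lemma pia2' : pi (a ^+ 2) = 1 %[mod k].
Proof. by rewrite (piX Hsm) ?aG // expnS expn1 pia2. Qed.

Lemma piaiE i : pi (a ^+ i) = (pi a ^ odd i)%N %[mod k].
Proof.
rewrite [in LHS]aexp_split (piMul Hsm) ?groupX ?aG // -modnMml (piX Hsm) ?groupX ?aG //.
by rewrite -modnXm pia2' modnXm exp1n modnMml mul1n (piX Hsm) ?aG.
Qed.

Lemma piaibE i : pi (a ^+ i * b) = (pi a ^ odd i * pi b)%N %[mod k].
Proof.
by rewrite (piMul Hsm) ?groupX ?aG ?bG // -modnMml piaiE modnMml.
Qed.

Lemma aut_of : pi a = 1 %[mod k] -> pi b = 1 %[mod k] -> skew_is_aut G phi pi.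
Proof.
move=> ea eb x xG; case: (decomp xG) => i [->|->].
  by rewrite piaiE (eqmX _ ea) exp1n.
by rewrite piaibE (eqmM (eqmX _ ea) eb) exp1n.
Qed.

Lemma part1 n : odd n -> a ^+ n = 1 -> skew_is_aut G phi pi.
Proof.
move=> on an.
have ea : pi a = 1 %[mod k].
  by have := piaiE n; rewrite on expn1 an (pi1 Hsm) => ->.
exact: aut_of ea (lemX ea).
Qed.

Lemma genK (S : {set gT}) : S \subset Ker -> <<S>> \subset Ker.
Proof. by rewrite (gen_subG S (KerG Hsm)). Qed.

Lemma part2 : ~ skew_is_aut G phi pi ->
  Ker = <[a ^+ 2]> \/ Ker = <<[set a ^+ 2; a * b]>> \/ Ker = <<[set a ^+ 2; b]>>.
Proof.
move=> na.
have nu : pi a != 1 %[mod k].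
  by apply/negP => /eqP ea; apply: na; apply: aut_of ea (lemX ea).
have a2K : a ^+ 2 \in Ker by apply/kerP; split; [exact: groupX aG | exact: pia2'].
have decK x : x \in Ker -> exists i (o : bool),
    (x = (a ^+ 2) ^+ i * a ^+ o /\ (pi a ^ o)%N = 1 %[mod k]) \/
    (x = (a ^+ 2) ^+ i * a ^+ o * b /\ (pi a ^ o * pi b)%N = 1 %[mod k]).
  case/kerP => xG ex; case: (decomp xG) => i [xe|xe]; exists i./2, (odd i).
    by left; split; [rewrite xe aexp_split | rewrite -ex xe piaiE].
  by right; split; [rewrite xe aexp_split | rewrite -ex xe piaibE].
have A2 i : (a ^+ 2) ^+ i \in <<[set a ^+ 2; b]>> by rewrite groupX // mem_gen // !inE eqxx.
have B2 i : (a ^+ 2) ^+ i \in <<[set a ^+ 2; a * b]>> by rewrite groupX // mem_gen // !inE eqxx.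
have bK : pi b = 1 %[mod k] -> b \in Ker by move=> eb; apply/kerP; split; [exact: bG | exact: eb].
case: (boolP (pi b == 1 %[mod k])) => [/eqP eb | nv].
  right; right; apply/eqP; rewrite eqEsubset; apply/andP; split.
    apply/subsetP => x /decK[i [o [[-> h]|[-> h]]]]; move: h; case: o => /=;
      rewrite ?expn1 ?expn0 ?mul1n ?expg1 ?expg0 ?mulg1 => h.
    - by rewrite h eqxx in nu.
    - exact: A2.
    - by move: h; rewrite -modnMmr eb modnMmr muln1 => h; rewrite h eqxx in nu.
    - by rewrite groupM // mem_gen // !inE eqxx orbT.
  by apply: genK; rewrite subUset !sub1set a2K bK.
case: (boolP ((pi a * pi b)%N == 1 %[mod k])) => [/eqP eab | nab].
  right; left; apply/eqP; rewrite eqEsubset; apply/andP; split.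
    apply/subsetP => x /decK[i [o [[-> h]|[-> h]]]]; move: h; case: o => /=;
      rewrite ?expn1 ?expn0 ?mul1n ?expg1 ?expg0 ?mulg1 => h.
    - by rewrite h eqxx in nu.
    - exact: B2.
    - by rewrite -mulgA groupM // mem_gen // !inE eqxx orbT.
    - by rewrite h eqxx in nv.
  apply: genK; rewrite subUset !sub1set a2K /=.
  by apply/kerP; split; [rewrite groupM ?aG ?bG | rewrite (piMul Hsm) ?aG ?bG].
left; apply/eqP; rewrite eqEsubset; apply/andP; split.
  apply/subsetP => x /decK[i [o [[-> h]|[-> h]]]]; move: h; case: o => /=;
    rewrite ?expn1 ?expn0 ?mul1n ?expg1 ?expg0 ?mulg1 => h.
  - by rewrite h eqxx in nu.
  - exact: mem_cycle.
  - by rewrite h eqxx in nab.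
  - by rewrite h eqxx in nv.
by apply: genK; rewrite sub1set.
Qed.

End WithPhi.
End Dihedral.

Section Morph.
Variables (gT : finGroupType) (G : {group gT}) (d : {perm gT}).
Hypotheses (hd : perm_on G d) (md : {in G &, {morph d : x y / x * y}}).

Lemma dG x : (d x \in G) = (x \in G). Proof. exact: perm_closed. Qed.
Lemma dVG x : (d^-1 x \in G) = (x \in G). Proof. exact: perm_closed (perm_onV hd). Qed.

Lemma d1 : d 1 = 1.
Proof.
have := md (group1 G) (group1 G); rewrite mulg1 -{1}(mulg1 (d 1)).
by move/mulgI.
Qed.

Lemma dV x : x \in G -> d x^-1 = (d x)^-1.
Proof.
move=> xG; apply/esym/eqP; rewrite eq_invg_mul -md ?groupV // mulgV d1 //.
Qed.

Lemma dX x n : x \in G -> d (x ^+ n) = (d x) ^+ n.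
Proof.
move=> xG; elim: n => [|n IH]; first by rewrite !expg0 d1.
by rewrite !expgS md ?groupX // IH.
Qed.

Lemma mdV : {in G &, {morph d^-1 : x y / x * y}}.
Proof.
move=> x y xG yG; rewrite -{1}(permKV d x) -{1}(permKV d y) -md ?dVG //.
by rewrite permK.
Qed.

Lemma pre_gen (S : {set gT}) (H : {group gT}) :
  S \subset G -> {in S, forall x, d x \in H} -> {in <<S>>, forall x, d x \in H}.
Proof.
move=> sSG hS.
have gs : group_set [set y in G | d y \in H].
  apply/group_setP; split; first by rewrite inE group1 d1 group1.
  move=> x y; rewrite !inE => /andP[xG xH] /andP[yG yH].
  by rewrite groupM // md // groupM.
have : <<S>> \subset Group gs.
  rewrite gen_subG; apply/subsetP => x xS; rewrite inE (subsetP sSG) //=.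
  exact: hS.
by move=> sub x /(subsetP sub); rewrite inE => /andP[].
Qed.

Lemma core_all (phi : {perm gT}) pi c i : c \in skew_core G phi pi ->
  exists2 y, y \in skew_ker G phi pi & c = (phi ^+ i) y.
Proof.
move=> cC; exists ((phi ^+ (#[phi] * i - i)) c); first exact: coreP.
rewrite -permM -expgD.
have k0 : 0 < #[phi] by apply: order_gt0.
have -> : (#[phi] * i - i + i = #[phi] * i)%N by nia.
by rewrite expgM expg_order expg1n perm1.
Qed.

Lemma conj_smooth (phi : {perm gT}) (pi : gT -> nat) :
  smooth_skew G phi pi ->
  smooth_skew G (d * phi * d^-1) (fun x => pi (d x)) /\
  forall x, (x \in skew_ker G (d * phi * d^-1) (fun x => pi (d x))) =
            (x \in G) && (d x \in skew_ker G phi pi).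
Proof.
move=> Hsm.
set psi := d * phi * d^-1.
have psiE : psi = phi ^ d^-1 by rewrite /psi conjgE invgK mulgA.
have opsi : #[psi] = #[phi] by rewrite psiE orderJ.
have psiX m x : (psi ^+ m) x = d^-1 ((phi ^+ m) (d x)).
  by rewrite psiE -conjXg conjgE invgK !permM.
have kerE x : (x \in skew_ker G psi (fun x => pi (d x))) =
              (x \in G) && (d x \in skew_ker G phi pi).
  by rewrite !inE opsi dG; case: (x \in G).
have dV1 : d^-1 1 = 1 by rewrite -{1}d1 permK.
have sk : skew_morphism G psi (fun x => pi (d x)).
  split.
  - by apply: perm_onM; [apply: perm_onM => //; exact: sk_on Hsm | exact: perm_onV].
  - by rewrite -(expg1 psi) psiX d1 expg1 (sk_1 Hsm) dV1.
  - move=> x y xG yG; rewrite -(expg1 psi) !psiX !expg1 md // (sk_M Hsm) ?dG //.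
    by rewrite mdV // ?(perm_closed _ (sk_on Hsm)) ?dG // (phiXG Hsm) ?dG.
split; last exact: kerE.
split; first exact: sk.
move=> x xG.
have dxG : d x \in G by rewrite dG.
case/lcosetP: (sk_sm Hsm dxG) => c cC e; apply/lcosetP; exists (d^-1 c); last first.
  by rewrite -(expg1 psi) psiX expg1 e mdV ?dG ?(coreG cC) // permK.
rewrite /skew_core opsi.
apply: (big_ind (fun S : {set gT} => d^-1 c \in S)) => //.
  by move=> A B hA hB; rewrite inE hA.
move=> i _; case: (core_all i cC) => y yK ->.
apply/imsetP; exists (d^-1 y).
  rewrite kerE permKV yK andbT dVG; by case/kerP: yK.
by rewrite psiX permKV.
Qed.

End Morph.

Theorem lemma5 (gT : finGroupType) (G : {group gT}) (n : nat) (a b : gT) :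
  (3 <= n)%N -> dihedral_pres G n a b ->
  (odd n -> forall (phi : {perm gT}) (pi : gT -> nat),
     smooth_skew G phi pi -> skew_is_aut G phi pi)
  /\
  (~~ odd n -> forall (phi : {perm gT}) (pi : gT -> nat),
     smooth_skew G phi pi -> ~ skew_is_aut G phi pi ->
     skew_ker G phi pi = <[a ^+ 2]> \/
     skew_ker G phi pi = <<[set a ^+ 2; a * b]>> \/
     skew_ker G phi pi = <<[set a ^+ 2; b]>>)
  /\
  (~~ odd n -> forall gamma : {perm gT},
     perm_on G gamma -> {in G &, {morph gamma : x y / x * y}} ->
     gamma a = a -> gamma b = a * b ->
     forall phi : {perm gT},
       (exists pi : gT -> nat, smooth_skew G phi pi /\
           skew_ker G phi pi = <<[set a ^+ 2; b]>>) <->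
       (exists pi : gT -> nat, smooth_skew G (gamma * phi * gamma^-1) pi /\
           skew_ker G (gamma * phi * gamma^-1) pi = <<[set a ^+ 2; a * b]>>)).
Proof.
move=> _ [HG _ Han Hb2 Hrel].
split.
  by move=> on phi pi Hsm; exact: (part1 HG Hb2 Hrel Hsm on Han).
split.
  by move=> _ phi pi Hsm na; exact: (part2 HG Hb2 Hrel Hsm na).
move=> _ gamma hg mg ga gb phi.
have aG := aG HG; have bG := bG HG.
have gV := perm_onV hg; have mgV := mdV hg mg.
have gVa : gamma^-1 a = a by rewrite -{1}ga permK.
have gVb : gamma^-1 b = a^-1 * b.
  have : gamma (a^-1 * b) = b by rewrite mg ?groupV // (dV mg) // ga gb mulKg.
  by move=> E; rewrite -{1}E permK.
have sHbG : <<[set a ^+ 2; b]>> \subset G.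
  by rewrite gen_subG subUset !sub1set groupX.
have sHabG : <<[set a ^+ 2; a * b]>> \subset G.
  by rewrite gen_subG subUset !sub1set groupX // groupM.
have F1 x : x \in G -> (gamma x \in <<[set a ^+ 2; b]>>) = (x \in <<[set a ^+ 2; a * b]>>).
  move=> xG; apply/idP/idP => h.
    rewrite -(permK gamma x).
    apply: (pre_gen mgV (S := [set a ^+ 2; b])) => //.
      by rewrite subUset !sub1set groupX.
    move=> y; rewrite !inE => /orP[] /eqP ->.
      by rewrite (dX mgV) // gVa mem_gen // !inE eqxx.
    rewrite gVb.
    have -> : a^-1 * b = (a ^+ 2)^-1 * (a * b).
      by rewrite expgS expg1 invMg -!mulgA mulKg.
    by rewrite groupM ?groupV // mem_gen // !inE eqxx ?orbT.
  apply: (pre_gen mg (S := [set a ^+ 2; a * b])) => //.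
    by rewrite subUset !sub1set groupX // groupM.
  move=> y; rewrite !inE => /orP[] /eqP ->.
    by rewrite (dX mg) // ga mem_gen // !inE eqxx.
  rewrite mg // ga gb mulgA -(expg1 a) -expgS.
  by rewrite groupM // mem_gen // !inE eqxx ?orbT.
split.
  case=> pi [Hsm Hk]; exists (fun x => pi (gamma x)).
  have [sm' kE] := conj_smooth hg mg Hsm.
  split => //; apply/setP => x; rewrite kE Hk.
  case: (boolP (x \in G)) => xG; first exact: F1.
  by apply/esym/negP => /(subsetP sHabG); rewrite (negPf xG).
case=> pi' [Hsm Hk]; exists (fun x => pi' (gamma^-1 x)).
have [sm' kE] := conj_smooth gV mgV Hsm.
have E : gamma^-1 * (gamma * phi * gamma^-1) * gamma^-1^-1 = phi.
  by rewrite invgK !mulgA mulVg mul1g -mulgA mulVg mulg1.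
rewrite E in sm' kE.
split => //; apply/setP => x; rewrite kE Hk.
case: (boolP (x \in G)) => xG; first by rewrite -F1 ?permKV // (perm_closed _ gV).
by apply/esym/negP => /(subsetP sHbG); rewrite (negPf xG).
Qed.
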